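(* For all integers $L\ge 0$, $p\ge 0$ and $n\ge p$, $$b_L(p,n+1)=\sum_{k=0}^{n-p}\binom{n}{k}\binom{n+1}{k}^{L}b_L(p,k),$$ with $b_L(p,0)=1$, $b_L(p,1)=\cdots=b_L(p,p)=0$ and $b_L(p,p+1)=1$. Consequently all $b_L(p,n)$ are nonnegative integers.
   Context: For an integer $L\ge 0$ let ${}_0F_L(z)=\sum_{n=0}^{\infty}\frac{z^n}{(n!)^{L+1}}$. For an integer $p\ge0$ define the numbers $b_L(p,n)$, $n\ge0$, by the formal power series identity $\exp\Big({}_0F_L(z)-\sum_{k=0}^{p}\frac{z^k}{(k!)^{L+1}}\Big)=\sum_{n=0}^{\infty}b_L(p,n)\frac{z^n}{(n!)^{L+1}}$. *)

(* Defs.v *)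
(* Formal power series over rat, handled via truncations. *)
From mathcomp Require Import all_boot all_order all_algebra.
Set Implicit Arguments. Unset Strict Implicit. Unset Printing Implicit Defensive.
Import Order.TTheory GRing.Theory Num.Theory.
Local Open Scope ring_scope.

(* Coefficient of z^i in  0F_L(z) - sum_{k=0}^p z^k/(k!)^(L+1):
   1/(i!)^(L+1) if i > p, and 0 otherwise. *)
Definition fcoef (L p i : nat) : rat :=
  if (p < i)%N then ((i`! ^ L.+1)%N)%:R^-1 else 0.

Definition fpoly (L p N : nat) : {poly rat} := \poly_(i < N.+1) fcoef L p i.

(* Coefficient of z^n in exp(f) = sum_m f^m/m!.  Since f has zero constant
   term, only m <= n and the truncation of f to degree n contribute. *)
Definition expcoef (L p n : nat) : rat :=
  (\sum_(m < n.+1) (m`!)%:R^-1 *: (fpoly L p n) ^+ m)`_n.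

Definition bL (L p n : nat) : rat := ((n`! ^ L.+1)%N)%:R * expcoef L p n.

(* Main.v *)
Require Import Defs.
From mathcomp Require Import all_boot all_order all_algebra.
Import Order.TTheory GRing.Theory Num.Theory.
Local Open Scope ring_scope.
From mathcomp Require Import ring zify.

Lemma low0 (K : nat) (d : {poly rat}) :
  (forall i, (i < K)%N -> d`_i = 0) -> d = drop_poly K d * 'X^K.
Proof.
move=> H; rewrite -{1}(poly_take_drop K d).
have -> : take_poly K d = 0.
  by apply/polyP=> i; rewrite coef_take_poly coef0; case: ifP => // /H.
by rewrite add0r.
Qed.

Lemma fpoly_X (L p N : nat) : fpoly L p N = drop_poly 1 (fpoly L p N) * 'X^1.
Proof.
apply: low0 => i; rewrite ltnS leqn0 => /eqP ->.
by rewrite coef_poly /fcoef ltn0.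
Qed.

Lemma fpoly_pow_low (L p N m k : nat) : (k < m)%N -> ((fpoly L p N) ^+ m)`_k = 0.
Proof.
move=> km; rewrite fpoly_X exprMn -exprM mul1n coefMXn km //.
Qed.

Lemma fpoly_cong (L p N k : nat) : (k <= N)%N ->
  fpoly L p N - fpoly L p k = drop_poly k.+1 (fpoly L p N - fpoly L p k) * 'X^(k.+1).
Proof.
move=> kN; apply: low0 => i ik.
rewrite coefB !coef_poly.
have -> : (i < k.+1)%N by []. have -> : (i < N.+1)%N by apply: leq_trans ik _.
by rewrite subrr.
Qed.

Lemma fpoly_pow_eq (L p N k m : nat) : (k <= N)%N ->
  ((fpoly L p N) ^+ m)`_k = ((fpoly L p k) ^+ m)`_k.
Proof.
move=> kN; apply/eqP; rewrite -subr_eq0 -coefB subrXX fpoly_cong //.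
by rewrite mulrAC coefMXn ltnSn.
Qed.

Lemma sum_trunc (F : nat -> rat) (K M : nat) : (K <= M)%N ->
  (forall m, (K <= m)%N -> (m < M)%N -> F m = 0) ->
  \sum_(m < M) F m = \sum_(m < K) F m.
Proof.
move=> KM H; rewrite -(subnKC KM) big_split_ord /= [X in _ + X]big1 ?addr0 //.
move=> i _; apply: H; first by rewrite leq_addr.
have := ltn_ord i; lia.
Qed.

Lemma trunc (L p N M k : nat) : (k <= N)%N -> (k < M)%N ->
  (\sum_(m < M) (m`!)%:R^-1 *: (fpoly L p N) ^+ m)`_k = expcoef L p k.
Proof.
move=> kN kM; rewrite /expcoef !coef_sum.
rewrite (@sum_trunc (fun m => ((m`!)%:R^-1 *: fpoly L p N ^+ m)`_k) _ _ kM).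
  by apply: eq_bigr => i _; rewrite !coefZ fpoly_pow_eq.
by move=> m km _; rewrite coefZ fpoly_pow_low ?mulr0.
Qed.

Lemma derivP (g : {poly rat}) M :
  (\sum_(m < M.+1) (m`!)%:R^-1 *: g ^+ m)^`() =
  g^`() * \sum_(m < M) (m`!)%:R^-1 *: g ^+ m.
Proof.
rewrite raddf_sum big_ord_recl /= derivZ deriv_exp mulr0n scaler0 add0r mulr_sumr.
apply: eq_bigr => i _ /=.
rewrite derivZ deriv_exp /= -scaler_nat scalerA factS natrM invfM mulrAC mulVf ?mul1r.
  by rewrite scalerAr.
by rewrite pnatr_eq0.
Qed.

Lemma erec (L p n : nat) : (n.+1)%:R * expcoef L p n.+1 =
  \sum_(j < n.+1) (fcoef L p j.+1 *+ j.+1) * expcoef L p (n - j).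
Proof.
have -> : expcoef L p n.+1 =
  (\sum_(m < n.+2) (m`!)%:R^-1 *: (fpoly L p n.+1) ^+ m)`_n.+1 by [].
rewrite mulr_natl -coef_deriv derivP coefM.
apply: eq_bigr => j _.
rewrite coef_deriv coef_poly.
have -> : (j.+1 < n.+2)%N by rewrite !ltnS -ltnS ltn_ord.
rewrite trunc //.
  by apply: leqW; apply: leq_subr.
by rewrite ltnS leq_subr.
Qed.

Lemma natid n k L : (k <= n)%N ->
  ('C(n,k) * 'C(n.+1,k)^L * (k`! ^ L.+1) * ((n.+1 - k)`! ^ L.+1) =
   n`! * (n.+1)`! ^ L * (n.+1 - k))%N.
Proof.
move=> kn.
rewrite -(bin_fact (leqW kn)) -{1}(bin_fact kn) !subSn // factS.
rewrite !expnMn !expnS. ring.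
Qed.

Lemma ezero (L p j : nat) : (j < p)%N -> expcoef L p j.+1 = 0.
Proof.
move=> jp; have := erec L p j.
rewrite big1; last first.
  move=> i _; rewrite /fcoef.
  have -> : (p < i.+1)%N = false.
    by apply/negbTE; rewrite -leqNgt; apply: leq_trans jp; rewrite ltnS -ltnS.
  by rewrite mul0rn mul0r.
by move/eqP; rewrite mulf_eq0 pnatr_eq0 /= => /eqP.
Qed.

Lemma b0 (L p : nat) : bL L p 0 = 1.
Proof.
by rewrite /bL /expcoef big_ord1 /= fact0 exp1n invr1 scale1r expr0 coef1 mul1r.
Qed.

Lemma brec (L p n : nat) : (p <= n)%N ->
  bL L p n.+1 =
  \sum_(0 <= k < (n - p).+1) (('C(n, k) * 'C(n.+1, k) ^ L)%N)%:R * bL L p k.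
Proof.
move=> pn; rewrite /bL.
have -> : (((n.+1)`! ^ L.+1)%N)%:R = ((n`! * (n.+1)`!^L)%N)%:R * (n.+1)%:R :> rat.
  by rewrite -natrM expnS factS; congr _%:R; ring.
rewrite -mulrA erec mulr_sumr (reindex_inj rev_ord_inj) /=.
rewrite (eq_bigr (fun j : 'I_n.+1 => ((n`! * (n.+1)`!^L)%N)%:R *
   ((fcoef L p (n - j).+1 *+ (n - j).+1) * expcoef L p j))); last first.
  by move=> j _; rewrite subSS subKn // -ltnS.
rewrite (@sum_trunc (fun j => ((n`! * (n.+1)`!^L)%N)%:R *
   ((fcoef L p (n - j).+1 *+ (n - j).+1) * expcoef L p j)) (n - p).+1 n.+1); first last.
- move=> m hm hm'; rewrite /fcoef.
  have -> : (p < (n - m).+1)%N = false by apply/negbTE; rewrite -leqNgt; lia.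
  by rewrite mul0rn mul0r mulr0.
- lia.
rewrite big_mkord; apply: eq_bigr => j _.
have jn : (j <= n - p)%N by rewrite -ltnS.
have jn' : (j <= n)%N by apply: leq_trans jn (leq_subr _ _).
rewrite /fcoef.
have -> : (p < (n - j).+1)%N by lia.
have H := @natid n j L jn'; rewrite subSn // in H.
rewrite -(mulr_natl _ (n - j).+1) !mulrA -natrM -H natrM mulfK; last by rewrite pnatr_eq0 -lt0n expn_gt0 fact_gt0.
by rewrite [X in X * _ = _]natrM.
Qed.

Lemma bsum (L p K : nat) (c : nat -> nat) :
  (forall k, (k < K)%N -> exists m : nat, bL L p k = m%:R) ->
  exists m : nat, \sum_(0 <= k < K) (c k)%:R * bL L p k = m%:R.
Proof.
elim: K => [|K IH] H; first by exists 0%N; rewrite big_geq.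
rewrite big_nat_recr //.
have [m1 Hm1] := IH (fun k hk => H k (ltnW hk)).
have [m2 Hm2] := H K (ltnSn K).
by exists (m1 + c K * m2)%N; rewrite Hm1 Hm2 natrD natrM.
Qed.

Theorem mainTheorem7 (L p : nat) :
  (forall n : nat, (p <= n)%N ->
     bL L p n.+1 =
       \sum_(0 <= k < (n - p).+1) (('C(n, k) * 'C(n.+1, k) ^ L)%N)%:R * bL L p k)
  /\ bL L p 0 = 1
  /\ (forall k : nat, (1 <= k <= p)%N -> bL L p k = 0)
  /\ bL L p p.+1 = 1
  /\ (forall n : nat, exists m : nat, bL L p n = m%:R).
Proof.
split; first exact: brec.
split; first exact: b0.
split.
  case=> [|j] //= jp; by rewrite /bL ezero ?mulr0.
split.
  by rewrite brec // subnn big_nat1 bin0 exp1n b0 mulr1.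
elim/ltn_ind => [[|n]] IH; first by exists 1%N; rewrite b0.
case: (ltnP n p) => np.
  by exists 0%N; rewrite /bL ezero ?mulr0.
rewrite (brec L p n np); apply: bsum => k hk; apply: IH.
by rewrite ltnS (leq_trans _ (leq_subr p n)) // -ltnS.
Qed.
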